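(* Let $\alpha,\beta\in\Bbbk^n$ and $\mathcal H=\mathcal H(\alpha,\beta,0)$, graded by path length. Then the total Hilbert series of $\mathcal H$ is $h^{\mathrm{tot}}_{\mathcal H}(t)=n(1-t)^{-2}(1-t^2)^{-1}$.
   Context: $\Bbbk$ is an algebraically closed field of characteristic zero. Fix $n\ge1$; indices are taken modulo $n$ and $Q_0=\{0,\dots,n-1\}$. Let $Q$ be the quiver with vertex set $Q_0$ and arrows $u_i:i\to i+1$ and $d_i:i+1\to i$ for each $i\in Q_0$. Paths are written left to right (target of each arrow equals source of the next), $e_i$ is the trivial path at $i$. For $\alpha,\beta\in\Bbbk^n$, $\mathcal H(\alpha,\beta,0)$ is $\Bbbk Q$ modulo the relations $d_{i-1}u_{i-1}u_i=\alpha_iu_id_iu_i+\beta_iu_iu_{i+1}d_{i+1}$ and $d_id_{i-1}u_{i-1}=\alpha_id_iu_id_i+\beta_iu_{i+1}d_{i+1}d_i$ for all $i\in Q_0$. It is $\mathbb N$-graded with $\deg u_i=\deg d_i=1$, $\deg e_i=0$. For a graded quotient $A=\Bbbk Q/I$, let $H_k\in M_n(\mathbb N)$ have $(i,j)$ entry $\dim_\Bbbk e_iA_ke_j$; the total Hilbert series $h_A^{\mathrm{tot}}(t)$ is the series whose coefficient of $t^k$ is the sum of the entries of $H_k$. *)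

(* Defs.v *)
From HB Require Import structures.
From mathcomp Require Import all_boot all_order all_algebra.
Set Implicit Arguments. Unset Strict Implicit. Unset Printing Implicit Defensive.
Import GRing.Theory.
Local Open Scope ring_scope.

(* Quiver Q: vertices 'I_n, arrows (i, true) = u_i : i -> i+1,
   (i, false) = d_i : i+1 -> i (indices mod n via ordS / ord_pred). *)
Section Quiver.
Variable n : nat.

Definition arrow := ('I_n * bool)%type.
Definition u_ (i : 'I_n) : arrow := (i, true).
Definition d_ (i : 'I_n) : arrow := (i, false).
Definition src (a : arrow) : 'I_n := if a.2 then a.1 else ordS a.1.
Definition tgt (a : arrow) : 'I_n := if a.2 then ordS a.1 else a.1.

(* a path is a start vertex together with a word of arrows, written left to
   right (target of each arrow = source of the next) *)
Fixpoint valid_from (s : 'I_n) (w : seq arrow) : bool :=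
  if w is a :: w' then (src a == s) && valid_from (tgt a) w' else true.
Definition endv (s : 'I_n) (w : seq arrow) : 'I_n := last s (map tgt w).

Variable F : fieldType.

Definition cand (k : nat) := ('I_n * k.-tuple arrow)%type.
(* ambient space with basis the candidates; kQ_k is the span of the valid ones *)
Definition amb (k : nat) := {ffun cand k -> F^o}.

Definition delta k (s : 'I_n) (w : seq arrow) : amb k :=
  [ffun x : cand k => ((x.1 == s) && (tval x.2 == w))%:R].

Definition kQ (k : nat) : {vspace amb k} :=
  (\sum_(x : cand k | valid_from x.1 x.2) <[delta k x.1 x.2]>)%VS.

(* the relations of H(alpha,beta,0) at vertex i, as (source, list of
   (coefficient, word)) *)
Variables alpha beta : 'I_n -> F.
Definition rel (i : 'I_n) (c : bool) : 'I_n * seq (F * seq arrow) :=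
  let ip := ord_pred i in let i1 := ordS i in
  if c then
    (i, [:: (1, [:: d_ ip; u_ ip; u_ i]);
            (- alpha i, [:: u_ i; d_ i; u_ i]);
            (- beta i, [:: u_ i; u_ i1; d_ i1])])
  else
    (i1, [:: (1, [:: d_ i; d_ ip; u_ ip]);
             (- alpha i, [:: d_ i; u_ i; d_ i]);
             (- beta i, [:: u_ i1; d_ i1; d_ i])]).

Definition relword1 (i : 'I_n) (c : bool) : seq arrow :=
  head [::] (map snd (rel i c).2).

Definition gen k (s : 'I_n) (a b : seq arrow) (i : 'I_n) (c : bool) : amb k :=
  if valid_from s (a ++ relword1 i c ++ b) then
    \sum_(cw <- (rel i c).2) cw.1 *: delta k s (a ++ cw.2 ++ b)
  else 0.

Definition Ideal (k : nat) : {vspace amb k} :=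
  (\sum_(l < k - 2) \sum_(s : 'I_n) \sum_(a : l.-tuple arrow)
     \sum_(b : (k - 3 - l).-tuple arrow) \sum_(i : 'I_n) \sum_(c : bool)
       <[gen k s a b i c]>)%VS.

(* left multiplication by e_i and right multiplication by e_j *)
Definition eproj k (i j : 'I_n) (f : amb k) : amb k :=
  [ffun x : cand k => if (x.1 == i) && (endv x.1 x.2 == j) then f x else 0].
Definition esand k (i j : 'I_n) (U : {vspace amb k}) : {vspace amb k} :=
  (linfun (@eproj k i j) @: U)%VS.

(* dim e_i A_k e_j, A = kQ / I : dim (e_i kQ_k e_j) - dim (e_i I_k e_j) *)
Definition Hk (k : nat) (i j : 'I_n) : nat :=
  (\dim (esand i j (kQ k)) - \dim (esand i j (Ideal k)))%N.

Definition Htot (k : nat) : nat := (\sum_(i : 'I_n) \sum_(j : 'I_n) Hk k i j)%N.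
End Quiver.

(* formal power series identity h(t) * q(t) = p(t) in Z[[t]] *)
Definition series_mul_eq (h : nat -> int) (q p : {poly int}) : Prop :=
  forall k : nat, \sum_(m < k.+1) h m * q`_(k - m) = p`_k.

(* Main.v *)
Require Import Defs.
From HB Require Import structures.
From mathcomp Require Import all_boot all_order all_algebra.
From mathcomp Require Import zify ring.
Require Import Defs.
Import GRing.Theory.
Local Open Scope ring_scope.

Set Implicit Arguments. Unset Strict Implicit. Unset Printing Implicit Defensive.

Section Rewr.
Variable n : nat.
Variable F : fieldType.
Variables alpha beta : 'I_n -> F.

Definition step (v : 'I_n) (b : bool) : 'I_n := if b then ordS v else ord_pred v.
Definition walk (s : 'I_n) (w : seq bool) : 'I_n := foldl step s w.

Lemma walk_cat s x y : walk s (x ++ y) = walk (walk s x) y.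
Proof. by rewrite /walk foldl_cat. Qed.

Definition lhs (c : bool) : seq bool := [:: false; c; true].
Definition rhs1 (c : bool) : seq bool :=
  if c then [:: true; false; true] else [:: false; true; false].
Definition rhs2 (c : bool) : seq bool :=
  if c then [:: true; true; false] else [:: true; false; false].
Definition ca (c : bool) (v : 'I_n) := if c then alpha v else alpha (ord_pred v).
Definition cb (c : bool) (v : 'I_n) := if c then beta v else beta (ord_pred v).

Lemma walk_rhs1 c v : walk v (rhs1 c) = walk v (lhs c).
Proof. by case: c; rewrite /walk /= ?ordSK ?ord_predK. Qed.
Lemma walk_rhs2 c v : walk v (rhs2 c) = walk v (lhs c).
Proof. by case: c; rewrite /walk /= ?ordSK ?ord_predK. Qed.

Definition consr (a : bool) (t : option (seq bool * bool * seq bool)) :=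
  omap (fun t => (a :: t.1.1, t.1.2, t.2)) t.

Fixpoint red (w : seq bool) : option (seq bool * bool * seq bool) :=
  match w with
  | [::] => None
  | a :: w' =>
    if w' is b :: c :: y then
      (if ~~ a && c then Some ([::], b, y) else consr a (red w'))
    else consr a (red w')
  end.

Lemma redP w : match red w with
  | None => forall x c y, w <> x ++ lhs c ++ y
  | Some (x, c, y) => w = x ++ lhs c ++ y /\
       forall x' c' y', w = x' ++ lhs c' ++ y' -> (size x <= size x')%N
  end.
Proof.
elim: w => [|a w IH] /=.
  by move=> [|? ?] ? ?.
have Hc : ~~ (~~ a && (nth false w 1)) -> match consr a (red w) with
  | None => forall x c y, a :: w <> x ++ lhs c ++ y
  | Some (x, c, y) => a :: w = x ++ lhs c ++ y /\
       forall x' c' y', a :: w = x' ++ lhs c' ++ y' -> (size x <= size x')%N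
  end.
  move=> Hh; rewrite /consr; case: (red w) IH => [[[x c] y]|] /=.
    move=> [Hw0 Hmin]; split; first by rewrite Hw0.
    move=> [|a' x'] c' y' /=.
      by case=> Ha Hw; move: Hh; rewrite Ha Hw.
    by case=> _ /Hmin.
  move=> H [|a' x'] c' y' /=.
    by case=> Ha Hw; move: Hh; rewrite Ha Hw.
  by case=> _ /H.
case: w IH Hc => [|b [|c y]] IH Hc; try by apply: Hc; rewrite ?andbF.
case: ifP => [/andP [/negbTE Ha Hc']|Hn]; last by apply: Hc; rewrite /= Hn.
subst; rewrite Hc'; split => // -[|? ?] //.
Qed.

Fixpoint inv (w : seq bool) : nat :=
  if w is a :: w' then ((if a then 0 else count id w') + inv w')%N else 0%N.

Lemma inv_cat x z : inv (x ++ z) = (inv x + count negb x * count id z + inv z)%N.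
Proof.
elim: x => [|a x IH] //=; rewrite IH count_cat; case: a => /=; lia.
Qed.

Lemma inv_lt x y z z' : count id z = count id z' -> count negb z = count negb z' ->
  (inv z < inv z')%N -> (inv (x ++ z ++ y) < inv (x ++ z' ++ y))%N.
Proof. by move=> H1 H2 H3; rewrite !inv_cat !count_cat H1 H2; lia. Qed.

Lemma inv_red1 x c y : (inv (x ++ rhs1 c ++ y) < inv (x ++ lhs c ++ y))%N.
Proof. by apply: inv_lt; case: c. Qed.
Lemma inv_red2 x c y : (inv (x ++ rhs2 c ++ y) < inv (x ++ lhs c ++ y))%N.
Proof. by apply: inv_lt; case: c. Qed.

Variable V : vectType F.
Variable D : 'I_n -> seq bool -> V.

Fixpoint Nf (fuel : nat) (s : 'I_n) (w : seq bool) : V :=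
  match fuel with
  | 0 => D s w
  | f.+1 => match red w with
    | None => D s w
    | Some (x, c, y) => ca c (walk s x) *: Nf f s (x ++ rhs1 c ++ y)
                      + cb c (walk s x) *: Nf f s (x ++ rhs2 c ++ y)
    end
  end.

Lemma Nf_fuel f1 f2 s w : (inv w < f1)%N -> (inv w < f2)%N -> Nf f1 s w = Nf f2 s w.
Proof.
elim: f1 f2 w => [|f1 IH] [|f2] w //= H1 H2.
have := redP w; case: (red w) => [[[x c] y]|] // [Hw _].
rewrite Hw in H1 H2.
have h1 := inv_red1 x c y; have h2 := inv_red2 x c y.
by rewrite (IH f2) ?(IH f2 (x ++ rhs2 c ++ y)) //; apply: leq_trans; eauto.
Qed.

Definition N s w := Nf (inv w).+1 s w.

Lemma N_unfold s w : N s w = match red w with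
    | None => D s w
    | Some (x, c, y) => ca c (walk s x) *: N s (x ++ rhs1 c ++ y)
                      + cb c (walk s x) *: N s (x ++ rhs2 c ++ y)
    end.
Proof.
rewrite /N /=; have := redP w; case: (red w) => [[[x c] y]|] // [Hw _].
have h1 := inv_red1 x c y; have h2 := inv_red2 x c y; rewrite -Hw in h1 h2.
by rewrite (@Nf_fuel (inv w) (inv (x ++ rhs1 c ++ y)).+1)
  ?(@Nf_fuel (inv w) (inv (x ++ rhs2 c ++ y)).+1).
Qed.

Lemma cat_cancel (x a b : seq bool) : x ++ a = x ++ b -> a = b.
Proof. by elim: x => //= ? ? IH [] /IH. Qed.

Lemma Nconf s x c y : N s (x ++ lhs c ++ y) =
  ca c (walk s x) *: N s (x ++ rhs1 c ++ y) + cb c (walk s x) *: N s (x ++ rhs2 c ++ y).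
Proof.
suff H : forall m x c y, (inv (x ++ lhs c ++ y) < m)%N -> N s (x ++ lhs c ++ y) =
  ca c (walk s x) *: N s (x ++ rhs1 c ++ y) + cb c (walk s x) *: N s (x ++ rhs2 c ++ y).
  exact: H.
elim=> // m IH {}x {}c {}y Hm.
rewrite N_unfold; have := redP (x ++ lhs c ++ y).
case: (red _) => [[[x0 c0] y0]|]; last by move=> H; case: (H x c y).
move=> [Hw Hmin]; have Hs := Hmin _ _ _ (erefl _).
have Hx : x = x0 ++ drop (size x0) x.
  have : take (size x0) (x0 ++ lhs c0 ++ y0) = take (size x0) (x ++ lhs c ++ y) by rewrite Hw.
  rewrite take_size_cat // take_cat.
  case: ltnP => [_ H|Hge]; first by rewrite {1}H cat_take_drop.
  have -> : size x0 = size x by apply/eqP; rewrite eqn_leq Hs Hge.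
  by rewrite subnn take0 cats0 => <-; rewrite drop_size cats0.
clear Hmin; move: Hw Hm Hs; rewrite Hx -catA; move: (drop (size x0) x) => z /cat_cancel.
move/esym => Heq Hm _; move: Heq Hm.
case: z => [|z1 [|z2 [|z3 z']]].
- by move=> /= [<- <-] _; rewrite cats0.
- move=> /= [? ? ? ?] Hm; subst.
  rewrite -!catA /= in Hm *.
  have Hv1 : walk s (x0 ++ [:: false]) = ord_pred (walk s x0) by rewrite walk_cat.
  have Hv2 : walk s (x0 ++ [:: true]) = ordS (walk s x0) by rewrite walk_cat.
  have I1 := inv_red2 x0 false (true :: y).
  have I2 := inv_red2 (x0 ++ [:: false]) true y.
  rewrite -!catA /= in I1 I2.
  have E1 := IH (x0 ++ [:: true]) false y.
  have E2 := IH x0 true (false :: y).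
  rewrite -!catA /= Hv2 ordSK in E1; rewrite /= in E2.
  rewrite E1 ?E2; try (apply: leq_trans; [eassumption|]; by []).
  rewrite /ca /cb Hv1 !scalerDr !scalerA.
  by [].
- by case: c0 c => -[].
- move=> /= [<- <- <- ->] Hm.
  rewrite -!catA /= in Hm *.
  set v0 := walk s x0.
  have Hv : forall r, walk s (x0 ++ r ++ z') = walk s (x0 ++ lhs c0 ++ z') ->
    walk s (x0 ++ [:: false, c0, true & z']) = walk s (x0 ++ r ++ z') by move=> r ->.
  have I1 := inv_red1 x0 c0 (z' ++ lhs c ++ y).
  have I2 := inv_red2 x0 c0 (z' ++ lhs c ++ y).
  have I3 := inv_red1 (x0 ++ lhs c0 ++ z') c y.
  have I4 := inv_red2 (x0 ++ lhs c0 ++ z') c y.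
  rewrite -!catA /= in I1 I2 I3 I4.
  have E1 := IH (x0 ++ rhs1 c0 ++ z') c y.
  have E2 := IH (x0 ++ rhs2 c0 ++ z') c y.
  have E3 := IH x0 c0 (z' ++ rhs1 c ++ y).
  have E4 := IH x0 c0 (z' ++ rhs2 c ++ y).
  rewrite -!catA in E1 E2.
  rewrite /= in E3 E4.
  rewrite E1 ?E2 ?E3 ?E4; try (apply: leq_trans; [eassumption|]; by []).
  rewrite !walk_cat walk_rhs1 walk_rhs2.
  rewrite !scalerDr !scalerA.
  set a1 := ca c0 _; set a2 := cb c0 _; set b1 := ca c _; set b2 := cb c _.
  rewrite [b1 * _]mulrC [b2 * _]mulrC [b1 * a2]mulrC [b2 * a2]mulrC.
  by rewrite addrACA.
Qed.



Lemma size_red1 x c y : size (x ++ rhs1 c ++ y) = size (x ++ lhs c ++ y).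
Proof. by rewrite !size_cat; case: c. Qed.
Lemma size_red2 x c y : size (x ++ rhs2 c ++ y) = size (x ++ lhs c ++ y).
Proof. by rewrite !size_cat; case: c. Qed.
Lemma walk_red1 s x c y : walk s (x ++ rhs1 c ++ y) = walk s (x ++ lhs c ++ y).
Proof. by rewrite !walk_cat walk_rhs1. Qed.
Lemma walk_red2 s x c y : walk s (x ++ rhs2 c ++ y) = walk s (x ++ lhs c ++ y).
Proof. by rewrite !walk_cat walk_rhs2. Qed.

Lemma N_ind s (P : seq bool -> V -> Prop) :
  (forall w, red w = None -> P w (D s w)) ->
  (forall x c y v1 v2, P (x ++ rhs1 c ++ y) v1 -> P (x ++ rhs2 c ++ y) v2 ->
     P (x ++ lhs c ++ y) (ca c (walk s x) *: v1 + cb c (walk s x) *: v2)) ->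
  forall w, P w (N s w).
Proof.
move=> H0 H1 w; move: {2}(inv w).+1 (ltnSn (inv w)) => m; elim: m w => // m IH w Hm.
rewrite N_unfold; have := redP w; case E: (red w) => [[[x c] y]|] //; last by move=> _; apply: H0.
move=> [Hw _]; subst w.
have h1 := inv_red1 x c y; have h2 := inv_red2 x c y.
by apply: H1; apply: IH; apply: leq_trans; eauto.
Qed.
End Rewr.


Section Paths.
Variable n : nat.
Definition arr (v : 'I_n) (b : bool) : arrow n := if b then u_ v else d_ (ord_pred v).
Fixpoint path_of (v : 'I_n) (w : seq bool) : seq (arrow n) :=
  if w is b :: w' then arr v b :: path_of (step v b) w' else [::].

Lemma src_arr (v : 'I_n) b : src (arr v b) = v.
Proof. by case: b; rewrite /src /= ?ord_predK. Qed.
Lemma tgt_arr (v : 'I_n) b : tgt (arr v b) = step v b.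
Proof. by case: b. Qed.

Lemma valid_path_of (v : 'I_n) w : valid_from v (path_of v w).
Proof. by elim: w v => //= b w IH v; rewrite src_arr eqxx tgt_arr IH. Qed.

Lemma size_path_of (v : 'I_n) w : size (path_of v w) = size w.
Proof. by elim: w v => //= b w IH v; rewrite IH. Qed.

Lemma path_of_cat (v : 'I_n) x y : path_of v (x ++ y) = path_of v x ++ path_of (walk v x) y.
Proof. by elim: x v => //= b x IH v; rewrite IH. Qed.

Lemma snd_path_of (v : 'I_n) w : map snd (path_of v w) = w.
Proof. by elim: w v => //= -[] w IH v; rewrite IH. Qed.

Lemma valid_pathE (v : 'I_n) p : valid_from v p -> path_of v (map snd p) = p.
Proof.
elim: p v => //= -[i b] p IH v /andP [/eqP Hs Hv].
rewrite /src /= in Hs; rewrite /tgt /= in Hv.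
case: b Hs Hv => /= Hs Hv; subst v; rewrite /arr /step /=.
  by rewrite IH.
by rewrite ordSK IH.
Qed.

Lemma endv_walk (v : 'I_n) p : valid_from v p -> endv v p = walk v (map snd p).
Proof.
rewrite /endv; elim: p v => //= -[i b] p IH v /andP [/eqP Hs Hv].
rewrite /src /= in Hs; rewrite /tgt /= in Hv.
rewrite IH //; case: b Hs Hv => /= Hs Hv; subst v => //.
by rewrite /walk /= ordSK.
Qed.

Lemma valid_cat (v : 'I_n) p q : valid_from v (p ++ q) = valid_from v p && valid_from (endv v p) q.
Proof. by rewrite /endv; elim: p v => //= a p IH v; rewrite IH andbA. Qed.

Lemma endv_path_of (v : 'I_n) w : endv v (path_of v w) = walk v w.
Proof. by rewrite endv_walk ?valid_path_of // snd_path_of. Qed.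
End Paths.

Fixpoint allwords (m : nat) : seq (seq bool) :=
  if m is m'.+1 then [seq true :: w | w <- allwords m'] ++ [seq false :: w | w <- allwords m']
  else [:: [::]].

Lemma cons_inj (b : bool) : injective (cons b). Proof. by move=> ? ? []. Qed.

Lemma mem_allwords m w : (w \in allwords m) = (size w == m).
Proof.
elim: m w => [|m IH] [|b w] //=; rewrite mem_cat.
  by apply/negbTE; rewrite negb_or; apply/andP; split; apply/mapP => -[].
rewrite eqSS -IH; case: b.
  rewrite (mem_map (@cons_inj true)) orbC.
  by case: (boolP (true :: w \in _)) => // /mapP [? _].
rewrite (mem_map (@cons_inj false)).
by case: (boolP (false :: w \in _)) => //= /mapP [? _].
Qed.

Lemma uniq_allwords m : uniq (allwords m).
Proof.
elim: m => //= m IH; rewrite cat_uniq !map_inj_uniq // ?IH ?andbT.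
  by apply/hasPn => w /mapP [? _ ->]; apply/mapP => -[].
all: by move=> ? ? [].
Qed.

Definition normal (w : seq bool) := red w == None.

Section Conc.
Variables (n : nat) (F : fieldType) (alpha beta : 'I_n -> F) (k : nat).
Local Notation V := (amb n F k).

Definition D (s : 'I_n) (w : seq bool) : V := delta F k s (path_of s w).
Local Notation NN := (N alpha beta D).

Definition relv (i : 'I_n) (c : bool) : 'I_n := if c then i else ordS i.

Lemma rel_words i c : (rel alpha beta i c).2 =
  [:: (1, path_of (relv i c) (lhs c)); (- ca alpha c (relv i c), path_of (relv i c) (rhs1 c));
      (- cb beta c (relv i c), path_of (relv i c) (rhs2 c))].
Proof.
case: c; rewrite /rel /relv /ca /cb /= /arr /step /= ?ord_predK ?ordSK //.
Qed.

Lemma relword1_valid (v : 'I_n) i c : valid_from v (relword1 alpha beta i c) -> v = relv i c.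
Proof.
by case: c; rewrite /relword1 /rel /relv /= /src /= ?ord_predK => /andP [/eqP <-].
Qed.

Definition Drel (s : 'I_n) (x : seq bool) (c : bool) (y : seq bool) : V :=
  D s (x ++ lhs c ++ y) - ca alpha c (walk s x) *: D s (x ++ rhs1 c ++ y)
    - cb beta c (walk s x) *: D s (x ++ rhs2 c ++ y).

Lemma gen_eq s a b i c : gen alpha beta k s a b i c =
  if valid_from s (a ++ relword1 alpha beta i c ++ b)
  then Drel s (map snd a) c (map snd b) else 0.
Proof.
rewrite /gen; case: ifP => // Hv.
move: (Hv); rewrite valid_cat => /andP [Ha]; rewrite valid_cat => /andP [Hr Hb].
have Hrv := relword1_valid Hr.
have Ea := valid_pathE Ha.
have Hw := endv_walk Ha.
rewrite rel_words !big_cons big_nil addr0 scale1r !scaleNr addrA.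
have Er : relword1 alpha beta i c = path_of (relv i c) (lhs c) by rewrite /relword1 rel_words.
rewrite Er Hrv endv_path_of in Hb.
rewrite /Drel /D !path_of_cat Ea -Hw Hrv walk_rhs1 walk_rhs2 (valid_pathE Hb) /=.
by [].
Qed.

Lemma D_kQ s w : size w = k -> D s w \in kQ n F k.
Proof.
move=> Hs; have Ht : size (path_of s w) == k by rewrite size_path_of Hs.
by rewrite memvE /kQ (sumv_sup (s, Tuple Ht)) //= ?valid_path_of.
Qed.

Lemma Drel_Ideal s x c y : size (x ++ lhs c ++ y) = k -> Drel s x c y \in Ideal alpha beta k.
Proof.
move=> Hs; rewrite !size_cat /= in Hs.
have Hl : (size x < k - 2)%N by lia.
pose l := Ordinal Hl.
have Ha : size (path_of s x) == l by rewrite size_path_of.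
set v := walk s x.
have Hb : size (path_of (walk v (lhs c)) y) == (k - 3 - l)%N by rewrite size_path_of /=; apply/eqP; lia.
pose i := if c then v else ord_pred v.
have Hi : relv i c = v by rewrite /relv /i; case: (c) => //; rewrite ord_predK.
rewrite memvE /Ideal (sumv_sup l) // (sumv_sup s) // (sumv_sup (Tuple Ha)) //
  (sumv_sup (Tuple Hb)) // (sumv_sup i) // (sumv_sup c) // -memvE /= gen_eq.
have Er : relword1 alpha beta i c = path_of (relv i c) (lhs c) by rewrite /relword1 rel_words.
rewrite Er Hi -/v -path_of_cat -path_of_cat valid_path_of !snd_path_of.
exact: memv_line.
Qed.

Lemma eproj_lin i j : linear (@eproj n F k i j).
Proof. by move=> a f g; apply/ffunP => x; rewrite !ffunE; case: ifP; rewrite ?scaler0 ?addr0. Qed.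
HB.instance Definition _ i j := GRing.isLinear.Build F V V *:%R (@eproj n F k i j) (eproj_lin i j).

Lemma eproj_D i j s w : eproj i j (D s w) = if (s == i) && (walk s w == j) then D s w else 0.
Proof.
apply/ffunP => -[s' t]; rewrite !ffunE /=.
case Hx: ((s' == s) && (tval t == path_of s w)).
  move/andP: Hx => [/eqP Hs /eqP Ht]; subst s'; rewrite Ht endv_path_of.
  by case: ifP => _; rewrite /D ?ffunE /= ?Ht ?eqxx.
by do 2?case: ifP => _; rewrite /D ?ffunE /= ?Hx.
Qed.

Definition Nx (x : cand n k) : V := if valid_from x.1 x.2 then NN x.1 (map snd x.2) else 0.
Definition NL (f : V) : V := \sum_(x : cand n k) f x *: Nx x.

Lemma NL_lin : linear NL.
Proof.
move=> a f g; rewrite /NL scaler_sumr -big_split; apply: eq_bigr => x _.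
by rewrite !ffunE scalerDl scalerA.
Qed.
HB.instance Definition _ := GRing.isLinear.Build F V V *:%R NL NL_lin.

Lemma NL_delta s (t : k.-tuple (arrow n)) : NL (delta F k s t) = Nx (s, t).
Proof.
rewrite /NL (bigD1 (s, t)) //= big1 ?addr0.
  by rewrite ffunE !eqxx scale1r.
move=> [s' t'] /=; rewrite ffunE /= => Hne.
suff -> : (s' == s) && (tval t' == tval t) = false by rewrite scale0r.
apply/negbTE; apply: contra Hne => /andP [/eqP -> /eqP /val_inj ->]; exact: eqxx.
Qed.

Lemma NL_D s w : size w = k -> NL (D s w) = NN s w.
Proof.
move=> Hs; have Ht : size (path_of s w) == k by rewrite size_path_of Hs.
by rewrite /D (_ : path_of s w = Tuple Ht) // NL_delta /Nx /= valid_path_of snd_path_of.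
Qed.

Lemma NL_Drel s x c y : size (x ++ lhs c ++ y) = k -> NL (Drel s x c y) = 0.
Proof.
move=> Hs; have Hs1 : size (x ++ rhs1 c ++ y) = k by rewrite size_red1.
have Hs2 : size (x ++ rhs2 c ++ y) = k by rewrite size_red2.
rewrite /Drel !linearB !linearZ /= !NL_D // Nconf.
by rewrite !scalerN addrAC addrK subrr.
Qed.

Lemma gen_size l (a : l.-tuple (arrow n)) (b : (k - 3 - l).-tuple (arrow n)) c :
  (l < k - 2)%N -> size (map snd a ++ lhs c ++ map snd b) = k.
Proof. by move=> Hl; rewrite !size_cat !size_map !size_tuple /=; lia. Qed.

Lemma Ideal_ker : (Ideal alpha beta k <= lker (linfun NL))%VS.
Proof.
apply/subv_sumP => l _; apply/subv_sumP => s _; apply/subv_sumP => a _.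
apply/subv_sumP => b _; apply/subv_sumP => i _; apply/subv_sumP => c _.
rewrite -memvE memv_ker lfunE /= gen_eq; case: ifP => _; last by rewrite linear0.
by rewrite NL_Drel // (gen_size a b c (ltn_ord l)).
Qed.

Lemma Drel_kQ s x c y : size (x ++ lhs c ++ y) = k -> Drel s x c y \in kQ n F k.
Proof.
move=> Hs; have Hs1 : size (x ++ rhs1 c ++ y) = k by rewrite size_red1.
have Hs2 : size (x ++ rhs2 c ++ y) = k by rewrite size_red2.
by rewrite /Drel !memvB ?memvZ ?D_kQ.
Qed.

Lemma Ideal_kQ : (Ideal alpha beta k <= kQ n F k)%VS.
Proof.
apply/subv_sumP => l _; apply/subv_sumP => s _; apply/subv_sumP => a _.
apply/subv_sumP => b _; apply/subv_sumP => i _; apply/subv_sumP => c _.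
rewrite -memvE gen_eq; case: ifP => _; last by rewrite mem0v.
by rewrite Drel_kQ // (gen_size a b c (ltn_ord l)).
Qed.

Lemma eproj_N i j s w : eproj i j (NN s w) = if (s == i) && (walk s w == j) then NN s w else 0.
Proof.
apply: (N_ind (P := fun w v => eproj i j v = if (s == i) && (walk s w == j) then v else 0)).
  by move=> w' _; rewrite eproj_D.
move=> x c y v1 v2 H1 H2; rewrite linearD !linearZ /= H1 H2 walk_red1 walk_red2.
by case: ifP; rewrite ?scaler0 ?addr0.
Qed.

Lemma NL_eproj i j f : NL (eproj i j f) = eproj i j (NL f).
Proof.
rewrite /NL linear_sum; apply: eq_bigr => -[s t] _ /=; rewrite linearZ /= ffunE /= /Nx /=.
case Hv: (valid_from s t); last by rewrite (linear0 (eproj i j)) !scaler0.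
rewrite eproj_N -(endv_walk Hv).
by case: ifP => _; rewrite ?scaler0 ?scale0r.
Qed.

Lemma D_minus_N s w : size w = k -> D s w - NN s w \in Ideal alpha beta k.
Proof.
pose P := fun w v => size w = k -> D s w - v \in Ideal alpha beta k.
suff : P w (NN s w) by [].
apply: N_ind => [w' _ _|x c y v1 v2 H1 H2 Hs]; first by rewrite subrr mem0v.
have Hs1 : size (x ++ rhs1 c ++ y) = k by rewrite size_red1.
have Hs2 : size (x ++ rhs2 c ++ y) = k by rewrite size_red2.
set a := ca alpha c (walk s x); set b := cb beta c (walk s x).
have -> : D s (x ++ lhs c ++ y) - (a *: v1 + b *: v2) = Drel s x c y +
   (a *: (D s (x ++ rhs1 c ++ y) - v1) + b *: (D s (x ++ rhs2 c ++ y) - v2)).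
  rewrite /Drel -/a -/b !scalerBr.
  set A := a *: D _ _; set B := b *: D _ _; set C := a *: v1; set E := b *: v2.
  set X := D s _.
  rewrite opprD !addrA; congr (_ - _).
  rewrite addrAC -!addrA; congr (_ + _).
  by rewrite addrCA addKr addKr.
apply: memvD; first exact: (@Drel_Ideal s x c y Hs).
by apply: memvD; apply: memvZ; [apply: H1|apply: H2].
Qed.

Definition Wn (s j : 'I_n) : {vspace V} :=
  <<[seq D s w | w <- [seq w <- allwords k | normal w && (walk s w == j)]]>>%VS.

Lemma N_Wn s w : size w = k -> NN s w \in Wn s (walk s w).
Proof.
pose P := fun w v => size w = k -> v \in Wn s (walk s w).
suff : P w (NN s w) by [].
apply: N_ind => [w' Hr Hs|x c y v1 v2 H1 H2 Hs].
  apply: memv_span; apply: map_f; rewrite mem_filter mem_allwords Hs eqxx /normal Hr.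
  by rewrite !eqxx.
have Hs1 : size (x ++ rhs1 c ++ y) = k by rewrite size_red1.
have Hs2 : size (x ++ rhs2 c ++ y) = k by rewrite size_red2.
apply: memvD; apply: memvZ; [rewrite -(walk_red1 s x c y)|rewrite -(walk_red2 s x c y)]; auto.
Qed.

Lemma kQ_sub g : g \in kQ n F k -> g - NL g \in Ideal alpha beta k.
Proof.
suff H : (kQ n F k <= (\1 - linfun NL)%VF @^-1: Ideal alpha beta k)%VS.
  by move/(subvP H); rewrite -memv_preim add_lfunE opp_lfunE id_lfunE lfunE.
apply/subv_sumP => -[s t] /= Hv; rewrite -memvE -memv_preim add_lfunE opp_lfunE id_lfunE lfunE /=.
have -> : delta F k s t = D s (map snd t) by rewrite /D valid_pathE.
by rewrite NL_D ?size_map ?size_tuple // D_minus_N // size_map size_tuple.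
Qed.

Lemma NL_normal s w : size w = k -> normal w -> NL (D s w) = D s w.
Proof. by move=> Hs /eqP Hr; rewrite NL_D // N_unfold Hr. Qed.

Lemma Hk_dim i j : Hk alpha beta k i j = \dim (Wn i j).
Proof.
set f := linfun NL; set P := esand i j (kQ n F k).
have E1 : (P :&: lker f)%VS = esand i j (Ideal alpha beta k).
  apply/eqP; rewrite eqEsubv; apply/andP; split.
    apply/subvP => v; rewrite memv_cap => /andP [/memv_imgP [g Hg ->] Hk].
    rewrite memv_ker !lfunE /= in Hk.
    have -> : linfun (eproj i j) g = linfun (eproj i j) (g - NL g).
      by rewrite !lfunE /= linearB /= -NL_eproj (eqP Hk) subr0.
    apply: memv_img.
    exact: kQ_sub.
  apply/subvP => v /memv_imgP [g Hg ->]; rewrite memv_cap; apply/andP; split.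
    by apply: memv_img; apply: (subvP Ideal_kQ).
  rewrite memv_ker !lfunE /= NL_eproj.
  by move/(subvP Ideal_ker): Hg; rewrite memv_ker lfunE /= => /eqP ->; rewrite linear0.
have E2 : (f @: P)%VS = Wn i j.
  apply/eqP; rewrite eqEsubv; apply/andP; split.
    apply/subvP => v /memv_imgP [u /memv_imgP [g Hg ->] ->].
    rewrite !lfunE /= NL_eproj /NL linear_sum; apply: memv_suml => -[s t] _.
    rewrite linearZ; apply: memvZ; rewrite /Nx /=; case: ifP => Hv; last by rewrite linear0 mem0v.
    rewrite eproj_N; case: ifP => [/andP [/eqP Hs /eqP Hw]|_]; last by rewrite mem0v.
    by rewrite -Hs -Hw; apply: N_Wn; rewrite size_map size_tuple.
  apply/span_subvP => v /mapP [w]; rewrite mem_filter mem_allwords => /andP [/andP [Hn Hw] Hs] ->.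
  rewrite -(NL_normal i (eqP Hs) Hn) -(lfunE (NL)) -/f; apply: memv_img.
  have -> : D i w = linfun (eproj i j) (D i w) by rewrite lfunE /= eproj_D eqxx Hw.
  by apply: memv_img; apply: D_kQ; apply/eqP.
have := limg_ker_dim f P; rewrite E1 E2 => H.
by rewrite /Hk -/P -H addKn.
Qed.

Definition ev (p : cand n k) (f : V) : F^o := f p.
Lemma ev_lin p : linear (ev p).
Proof. by move=> a f g; rewrite /ev !ffunE. Qed.
HB.instance Definition _ p := GRing.isLinear.Build F V F^o *:%R (ev p) (ev_lin p).

Lemma path_of_inj (s : 'I_n) : injective (path_of s).
Proof. by move=> w1 w2 H; rewrite -(snd_path_of s w1) H snd_path_of. Qed.

Lemma free_D s (L : seq (seq bool)) : uniq L -> all (fun w => size w == k) L ->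
  free [seq D s w | w <- L].
Proof.
elim: L => [|w L IH] /=; first by rewrite /free /= span_nil dimv0.
move=> /andP [HwL HL] /andP [/eqP Hs HA]; rewrite free_cons IH // andbT.
have Ht : size (path_of s w) == k by rewrite size_path_of Hs.
pose p : cand n k := (s, Tuple Ht).
have Hsub : (<<[seq D s w | w <- L]>> <= lker (linfun (ev p)))%VS.
  apply/span_subvP => v /mapP [w' Hw' ->]; rewrite memv_ker lfunE /= /ev /D ffunE /=.
  rewrite eqxx /=; case: (path_of s w =P path_of s w') => [E|_]; last by rewrite eqxx.
  have E' : w = w' by rewrite -(snd_path_of s w) E snd_path_of.
  by subst w'; rewrite Hw' in HwL.
apply/negP => /(subvP Hsub); rewrite memv_ker lfunE /= /ev /D ffunE /= !eqxx /=.
by rewrite oner_eq0.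
Qed.

Lemma Wn_dim s j : \dim (Wn s j) = count (fun w => normal w && (walk s w == j)) (allwords k).
Proof.
rewrite -size_filter -(size_map (D s)); apply/eqP; apply: free_D.
  by rewrite filter_uniq // uniq_allwords.
by apply/allP => w; rewrite mem_filter mem_allwords => /andP [].
Qed.

Lemma sum_count_walk i (L : seq (seq bool)) :
  (\sum_(j : 'I_n) count (fun w => normal w && (walk i w == j)) L)%N = count normal L.
Proof.
elim: L => [|w L IH] /=; first by rewrite big1.
rewrite big_split /= IH; congr (_ + _)%N.
case: (normal w) => /=; last by rewrite big1.
by rewrite (bigD1 (walk i w)) //= eqxx big1 // => j /negbTE; rewrite eq_sym => ->.
Qed.

Lemma Htot_count : Htot alpha beta k = (n * count normal (allwords k))%N.
Proof.
rewrite /Htot (eq_bigr (fun _ => count normal (allwords k))).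
  by rewrite sum_nat_const card_ord.
by move=> i _; rewrite (eq_bigr _ (fun j _ => Hk_dim i j)) -(sum_count_walk i) ;
  apply: eq_bigr => j _; rewrite Wn_dim.
Qed.
End Conc.


Lemma normalE w : normal w = (red w == None). Proof. by []. Qed.

Lemma red3 a b c y : red (a :: b :: c :: y) =
  if ~~ a && c then Some ([::], b, y) else consr a (red (b :: c :: y)).
Proof. by []. Qed.

Lemma red_u w : red (true :: w) = consr true (red w).
Proof. by case: w => [|b [|c y]]. Qed.

Lemma normal_u w : normal (true :: w) = normal w.
Proof. by rewrite !normalE red_u /consr; case: (red w). Qed.

Lemma normal3 a b c w : normal (a :: b :: c :: w) = ~~ (~~ a && c) && normal (b :: c :: w).
Proof.
rewrite !normalE red3; case: ifP => // _.
by rewrite /consr; case: (red _).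
Qed.

Lemma normal2 a b : normal [:: a; b].
Proof. by case: a; case: b. Qed.

Lemma count_allS (P : pred (seq bool)) m :
  count P (allwords m.+1) = (count (fun w => P (true :: w)) (allwords m) +
                             count (fun w => P (false :: w)) (allwords m))%N.
Proof. by rewrite /= count_cat !count_map. Qed.

Definition fc m := count normal (allwords m).
Definition Pc m a b := count (fun w => normal (a :: b :: w)) (allwords m).

Lemma Pc0 a b : Pc 0 a b = 1%N.
Proof. by rewrite /Pc; case: a; case: b. Qed.

Lemma PcS m a b : Pc m.+1 a b = ((if a then Pc m b true else 0) + Pc m b false)%N.
Proof.
rewrite /Pc count_allS; congr (_ + _)%N.
  case: a; first by apply: eq_count => w; rewrite normal3.
  by rewrite (eq_count (a2 := pred0)) ?count_pred0 // => w; rewrite normal3.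
by apply: eq_count => w; rewrite normal3 andbF.
Qed.

Lemma Pc_tt m : Pc m true true = fc m.
Proof. by apply: eq_count => w; rewrite !normal_u. Qed.

Lemma Pc_ff m : Pc m false false = 1%N.
Proof. by elim: m => [|m IH]; rewrite ?Pc0 // PcS IH. Qed.

Lemma Pc_mix m : (Pc m true false + Pc m false true)%N = m.+2.
Proof. by elim: m => [|m IH]; rewrite ?Pc0 // !PcS Pc_ff; lia. Qed.

Lemma fcSS m : fc m.+2 = (fc m + m + 3)%N.
Proof.
rewrite /fc !count_allS.
rewrite -!/(Pc m _ _) Pc_tt Pc_ff.
rewrite -/(fc m); have := Pc_mix m; lia.
Qed.

Lemma fc0 : fc 0 = 1%N. Proof. by []. Qed.
Lemma fc1 : fc 1 = 2%N. Proof. by []. Qed.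
Lemma fc2 : fc 2 = 4%N. Proof. by []. Qed.
Lemma fc3 : fc 3 = 6%N. Proof. by []. Qed.

Lemma qE : ((1 - 'X) ^+ 2 * (1 - 'X ^+ 2) : {poly int}) = Poly [:: 1; -2; 0; 2; -1].
Proof.
rewrite /= !cons_poly_def mul0r add0r.
rewrite !rmorphN /= !rmorph_nat /=.
ring.
Qed.

Unset Implicit Arguments. Set Strict Implicit.

Theorem corollary1p3 (F : closedFieldType) (Fchar0 : [pchar F] =i pred0)
  (n : nat) (n_gt0 : (0 < n)%N) (alpha beta : 'I_n -> F) :
  series_mul_eq (fun k => (Htot alpha beta k)%:Z)
    ((1 - 'X) ^+ 2 * (1 - 'X ^+ 2)) (n%:Z)%:P.
Proof.
move=> k; rewrite qE coefC.
under eq_bigr => m _ do rewrite Htot_count coef_Poly -/(fc m).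
case: k => [|[|[|[|k]]]].
- by rewrite big_ord_recr big_ord0 /= fc0 add0r; lia.
- by rewrite !big_ord_recr big_ord0 /= fc0 fc1; lia.
- by rewrite !big_ord_recr big_ord0 /= fc0 fc1 fc2; lia.
- by rewrite !big_ord_recr big_ord0 /= fc0 fc1 fc2 fc3; lia.
rewrite -(big_mkord xpredT (fun m => (n * fc m)%:Z * [:: 1; -2; 0; 2; -1]`_(k.+4 - m))).
rewrite !big_nat_recr //=.
rewrite big1_seq; last first.
  move=> i; rewrite mem_index_iota => /andP [_ Hi]; rewrite nth_default ?mulr0 //=; lia.
have -> : (k.+4 - k.+4 = 0)%N by lia.
have -> : (k.+4 - k.+3 = 1)%N by lia.
have -> : (k.+4 - k.+2 = 2)%N by lia.
have -> : (k.+4 - k.+1 = 3)%N by lia.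
have -> : (k.+4 - k = 4)%N by lia.
rewrite /= !fcSS; lia.
Qed.
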